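(* Let $\mathcal A_+,\mathcal A_-\subseteq\mathbb R^n$ be disjoint finite sets such that $\mathcal A=\mathcal A_+\cup\mathcal A_-$ is full dimensional and $\mathcal A_-\subseteq\operatorname{int}(\operatorname{conv}(\mathcal A_+))$. Then every SONC signomial $f\in\mathcal S(\mathcal A_+,\mathcal A_-)$ satisfies $\#\operatorname{Sing}_{>0}(f)\le1$.
   Context: For disjoint finite $\mathcal A_+,\mathcal A_-\subseteq\mathbb R^n$, a signomial with signed support $(\mathcal A_+,\mathcal A_-)$ is $f:\mathbb R^n_{>0}\to\mathbb R$, $f(x)=\sum_{a\in\mathcal A_+}c_ax^a-\sum_{b\in\mathcal A_-}c_bx^b$ with all $c_a,c_b>0$; $\mathcal S(\mathcal A_+,\mathcal A_-)$ is the set of these. Full dimensional means $\dim\operatorname{conv}(\mathcal A)=n$. $\operatorname{Sing}_{>0}(f)$ is the set of $x\in\mathbb R^n_{>0}$ with $f(x)=x_1\partial_{x_1}f(x)=\dots=x_n\partial_{x_n}f(x)=0$. A signed support $(\mathcal B_+,\mathcal B_-)$ with $\mathcal B=\mathcal B_+\cup\mathcal B_-$ is an extended circuit if either $\#\mathcal B=\#\mathcal B_+=1$ or $\operatorname{conv}(\mathcal B)$ is a simplex whose vertex set is $\mathcal B_+$; it is a circuit if either $\#\mathcal B=\#\mathcal B_+=1$ or it is an extended circuit with $\#\mathcal B_-=1$ and $\mathcal B_-\subseteq\operatorname{relint}(\operatorname{conv}(\mathcal B_+))$. A circuit signomial is a signomial whose signed support is a circuit. A signomial on $\mathbb R^n_{>0}$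 is SONC if it is a finite sum of circuit signomials each of which is nonnegative on $\mathbb R^n_{>0}$. *)

(* Defs.v *)
From HB Require Import structures.
From mathcomp Require Import all_boot all_order all_algebra.
From mathcomp Require Import finmap.
From mathcomp Require Import all_classical all_reals all_analysis.
Set Implicit Arguments. Unset Strict Implicit. Unset Printing Implicit Defensive.
Import Order.TTheory GRing.Theory Num.Theory.
Import numFieldNormedType.Exports.
Local Open Scope classical_set_scope.
Local Open Scope fset_scope.
Local Open Scope ring_scope.

Section Signomials.
Variables (R : realType) (n : nat).
Notation V := 'rV[R]_n.

Definition posorthant (x : V) : Prop := forall i : 'I_n, 0 < x ord0 i.

Definition monom (a x : V) : R := \prod_(i < n) (x ord0 i) `^ (a ord0 i).

Definition signomial (Ap Am : {fset V}) (c : V -> R) (x : V) : R :=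
  \sum_(a <- Ap) c a * monom a x - \sum_(b <- Am) c b * monom b x.

(* f : R^n_{>0} -> R lies in S(Ap, Am) (values outside the orthant are irrelevant) *)
Definition in_S (Ap Am : {fset V}) (f : V -> R) : Prop :=
  [disjoint Ap & Am] /\
  exists c : V -> R, (forall a, a \in Ap `|` Am -> 0 < c a) /\
    forall x, posorthant x -> f x = signomial Ap Am c x.

Definition convhull (B : {fset V}) : set V :=
  [set x | exists l : V -> R, (forall b, b \in B -> 0 <= l b) /\
     \sum_(b <- B) l b = 1 /\ x = \sum_(b <- B) l b *: b].

Definition aff (B : {fset V}) : set V :=
  [set x | exists l : V -> R, \sum_(b <- B) l b = 1 /\ x = \sum_(b <- B) l b *: b].

(* dim conv(B) = n, i.e. the affine hull of B is all of R^n *)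
Definition full_dimensional (B : {fset V}) : Prop := aff B = setT.

Definition affinely_independent (B : {fset V}) : Prop :=
  forall l : V -> R, \sum_(b <- B) l b = 0 -> \sum_(b <- B) l b *: b = 0 ->
    forall b, b \in B -> l b = 0.

Definition relint_aff (B : {fset V}) (C : set V) : set V :=
  [set x | C x /\ exists2 e : R, 0 < e & forall y, aff B y -> `|y - x| < e -> C y].

Definition relint_conv (B : {fset V}) : set V := relint_aff B (convhull B).

Definition simplex_with_vertices (B Bp : {fset V}) : Prop :=
  affinely_independent Bp /\ convhull B = convhull Bp.

Definition extended_circuit (Bp Bm : {fset V}) : Prop :=
  [disjoint Bp & Bm] /\
  ((#|` Bp `|` Bm| = 1 /\ #|` Bp| = 1)%N \/ simplex_with_vertices (Bp `|` Bm) Bp).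

Definition circuit (Bp Bm : {fset V}) : Prop :=
  [disjoint Bp & Bm] /\
  ((#|` Bp `|` Bm| = 1 /\ #|` Bp| = 1)%N \/
   (extended_circuit Bp Bm /\ #|` Bm| = 1%N /\
    forall b, b \in Bm -> relint_conv Bp b)).

Definition nonneg_circuit_signomial (Bp Bm : {fset V}) (c : V -> R) : Prop :=
  circuit Bp Bm /\ (forall a, a \in Bp `|` Bm -> 0 < c a) /\
  forall x, posorthant x -> 0 <= signomial Bp Bm c x.

Definition SONC (f : V -> R) : Prop :=
  exists s : seq ({fset V} * {fset V} * (V -> R)),
    (forall t, t \in s -> nonneg_circuit_signomial t.1.1 t.1.2 t.2) /\
    forall x, posorthant x -> f x = \sum_(t <- s) signomial t.1.1 t.1.2 t.2 x.

Definition Sing_pos (f : V -> R) : set V :=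
  [set x | posorthant x /\ f x = 0 /\
     forall i : 'I_n, x ord0 i * 'D_(delta_mx ord0 i) f x = 0].

End Signomials.

(* Main.v *)
Require Import Defs.
From HB Require Import structures.
From mathcomp Require Import all_boot all_order all_algebra.
From mathcomp Require Import finmap.
From mathcomp Require Import all_classical all_reals all_analysis.
From mathcomp Require Import ring lra.
Set Implicit Arguments. Unset Strict Implicit. Unset Printing Implicit Defensive.
Import Order.TTheory GRing.Theory Num.Theory.
Import numFieldNormedType.Exports.
Local Open Scope classical_set_scope.
Local Open Scope fset_scope.
Local Open Scope ring_scope.

Section Helpers.
Variables (R : realType) (n : nat).
Notation V := 'rV[R]_n.

Definition lin (a : V) (u : 'I_n -> R) : R := \sum_(i < n) a ord0 i * u i.

Lemma lin_add a b u : lin (a + b) u = lin a u + lin b u.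
Proof. by rewrite /lin -big_split /=; apply: eq_bigr => i _; rewrite mxE mulrDl. Qed.

Lemma lin_scale k a u : lin (k *: a) u = k * lin a u.
Proof. by rewrite /lin mulr_sumr; apply: eq_bigr => i _; rewrite mxE mulrA. Qed.

Lemma lin0 u : lin 0 u = 0.
Proof. by rewrite /lin big1 // => i _; rewrite mxE mul0r. Qed.

Lemma lin_sum (s : seq V) (l : V -> R) u :
  lin (\sum_(a <- s) l a *: a) u = \sum_(a <- s) l a * lin a u.
Proof.
elim: s => [|a s IH]; first by rewrite !big_nil lin0.
by rewrite !big_cons lin_add lin_scale IH.
Qed.

Lemma lin_uD a u w : lin a (fun i => u i + w i) = lin a u + lin a w.
Proof. by rewrite /lin -big_split /=; apply: eq_bigr => i _; rewrite mulrDr. Qed.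

Lemma lin_uZ a t u : lin a (fun i => t * u i) = t * lin a u.
Proof. by rewrite /lin mulr_sumr; apply: eq_bigr => i _; rewrite mulrCA. Qed.

Lemma monom_exp a x : posorthant x ->
  monom a x = expR (lin a (fun i => ln (x ord0 i))).
Proof.
move=> xp; rewrite /monom /lin expR_sum; apply: eq_bigr => i _.
by rewrite /powR gt_eqF // xp.
Qed.

Lemma monom_gt0 (a x : V) : posorthant x -> 0 < monom a x.
Proof. by move=> xp; rewrite monom_exp // expR_gt0. Qed.

Lemma sig_single (a : V) c x : posorthant x -> 0 < c a ->
  signomial [fset a] fset0 c x != 0.
Proof.
move=> xp ca; rewrite /signomial big_seq_fset1 big_seq_fset0 subr0.
by rewrite gt_eqF // mulr_gt0 // monom_gt0.
Qed.

Lemma sig_single' (Bp Bm : {fset V}) (a : V) c x :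
  Bp = [fset a] -> Bm = fset0 -> posorthant x -> 0 < c a ->
  signomial Bp Bm c x <> 0.
Proof. by move=> -> -> xp ca; apply/eqP; exact: sig_single. Qed.

Definition zpt (lx v : 'I_n -> R) (t : R) : V := \row_i expR (lx i + t * v i).

Lemma zpt_pos lx v t : posorthant (zpt lx v t).
Proof. by move=> i; rewrite mxE expR_gt0. Qed.

Lemma monom_z lx v t a :
  monom a (zpt lx v t) = expR (lin a lx + t * lin a v).
Proof.
rewrite monom_exp; last exact: zpt_pos.
congr expR.
rewrite (_ : (fun i => ln (zpt lx v t ord0 i)) = fun i => lx i + t * v i).
  by rewrite lin_uD lin_uZ.
by apply/funext => i; rewrite mxE expRK.
Qed.


Lemma key (s : seq V) (b : V) (c al be : V -> R) :
  (forall a, a \in s -> 0 < c a) ->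
  let G := fun t => \sum_(a <- s) c a * expR (al a + t * be a)
                    - c b * expR (al b + t * be b) in
  G 0 = 0 -> G 1 = 0 -> 0 <= G (1/2) -> forall t, G t = 0.
Proof.
move=> cpos G.
pose H := fun t => \sum_(a <- s) c a * expR ((al a - al b) + t * (be a - be b)) - c b.
have GH t : G t = expR (al b + t * be b) * H t.
  rewrite /G /H mulrBr mulr_sumr mulrC; congr (_ - _).
  apply: eq_bigr => a _; rewrite mulrCA -expRD; congr (_ * expR _); ring.
have eH t : G t = 0 <-> H t = 0.
  rewrite GH; split; last by move=> ->; rewrite mulr0.
  by move/eqP; rewrite mulf_eq0 expR_eq0 /= => /eqP.
move=> /eH H0 /eH H1; rewrite GH pmulr_rge0 ?expR_gt0 // => Hh.
pose F := fun a => c a * expR (al a - al b) * (1 - expR ((be a - be b) / 2)) ^+ 2.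
have sF : \sum_(a <- s) F a = H 0 + H 1 - 2 * H (1/2).
  rewrite /H /F.
  rewrite (_ : forall u v w x : R, u - x + (v - x) - 2 * (w - x) = u + v - 2 * w); last by move=> *; ring.
  rewrite mulr_sumr -sumrN -!big_split /=; apply: eq_bigr => a _.
  rewrite mul0r addr0 mul1r.
  have -> : expR (al a - al b + (be a - be b)) =
     expR (al a - al b) * expR ((be a - be b) / 2) ^+ 2.
    by rewrite expr2 -!expRD; congr expR; field.
  have -> : expR (al a - al b + 1 / 2 * (be a - be b)) =
     expR (al a - al b) * expR ((be a - be b) / 2).
    by rewrite -!expRD; congr expR; field.
  ring.
have F0 : \sum_(a <- s | a \in s) F a == 0.
  rewrite eq_le; apply/andP; split.
    by rewrite -big_seq sF H0 H1 add0r sub0r oppr_le0 mulr_ge0.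
  rewrite sumr_ge0 // => a /cpos ca.
  by rewrite mulr_ge0 ?sqr_ge0 // mulr_ge0 ?expR_ge0 // ltW.
have Fge : forall a, a \in s -> 0 <= F a.
  by move=> a /cpos ca; rewrite mulr_ge0 ?sqr_ge0 // mulr_ge0 ?expR_ge0 // ltW.
move: F0; rewrite psumr_eq0 // => /allP allF.
have beq : forall a, a \in s -> be a = be b.
  move=> a ain; have /implyP/(_ ain) := allF a ain.
  rewrite /F mulf_eq0 mulf_eq0 gt_eqF ?cpos // expR_eq0 /= sqrf_eq0 subr_eq0.
  move=> /eqP/esym/(congr1 (@ln R)); rewrite expRK ln1 => /eqP.
  by rewrite mulf_eq0 invr_eq0 pnatr_eq0 orbF subr_eq0 => /eqP.
move=> t; apply/eH; rewrite -H0 /H; congr (_ - _); rewrite big_seq [RHS]big_seq.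
by apply: eq_bigr => a /beq ->; rewrite subrr !mulr0.
Qed.


Lemma lbound (M : seq V) (g : V -> R) :
  (forall b, b \in M -> 0 < g b) ->
  exists2 d, 0 < d & forall b, b \in M -> d <= g b.
Proof.
elim: M => [|b M IH] H; first by exists 1.
have [d d0 Hd] : exists2 d, 0 < d & forall b, b \in M -> d <= g b.
  by apply: IH => x xM; apply: H; rewrite inE xM orbT.
exists (Order.min d (g b)).
  by rewrite lt_min d0 H // inE eqxx.
move=> x; rewrite inE => /predU1P[->|xM]; rewrite ge_min ?lexx ?orbT //.
by rewrite Hd.
Qed.

Lemma argmax (M : seq V) (g : V -> R) : M != [::] ->
  exists2 a, a \in M & forall b, b \in M -> g b <= g a.
Proof.
elim: M => [|b M IH] // _.
case: M IH => [|b' M'] IH.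
  by exists b; rewrite ?inE // => x; rewrite inE => /eqP ->.
have [a aM Ha] := IH isT.
have [le|lt] := leP (g a) (g b).
  exists b; first by rewrite inE eqxx.
  move=> x; rewrite inE => /predU1P[->//|xM]; exact: le_trans (Ha _ xM) le.
exists a; first by rewrite inE aM orbT.
move=> x; rewrite inE => /predU1P[->|xM]; last exact: Ha.
exact: ltW.
Qed.

Lemma asym (P M : seq V) (p q be : V -> R) (a0 : V) :
  uniq P -> a0 \in P -> (forall a, a \in P -> 0 <= p a) -> 0 < p a0 ->
  (forall b, b \in M -> 0 <= q b) -> (forall b, b \in M -> be b < be a0) ->
  exists t, \sum_(b <- M) q b * expR (t * be b) <
            \sum_(a <- P) p a * expR (t * be a).
Proof.
move=> uP a0P pge pa0 qge blt.
have [d d0 Hd] : exists2 d, 0 < d & forall b, b \in M -> d <= be a0 - be b.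
  by apply: lbound => b bM; rewrite subr_gt0 blt.
set K := \sum_(b <- M) q b.
have K0 : 0 <= K by rewrite /K big_seq sumr_ge0.
set t := K / (p a0 * d).
have t0 : 0 <= t by rewrite divr_ge0 // mulr_ge0 // ltW.
exists t.
have L1 : \sum_(b <- M) q b * expR (t * be b) <= K * expR (t * (be a0 - d)).
  rewrite /K mulr_suml big_seq [X in _ <= X]big_seq; apply: ler_sum => b bM.
  rewrite ler_wpM2l ?qge // ler_expR ler_wpM2l //.
  by rewrite lerBrDr -lerBrDl Hd.
have L2 : p a0 * expR (t * be a0) <= \sum_(a <- P) p a * expR (t * be a).
  rewrite (bigD1_seq a0) //= lerDl big_seq_cond sumr_ge0 // => a /andP[aP _].
  by rewrite mulr_ge0 ?pge ?expR_ge0.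
apply: le_lt_trans L1 _; apply: lt_le_trans L2.
have E : expR (t * be a0) = expR (t * (be a0 - d)) * expR (t * d).
  by rewrite -expRD; congr expR; ring.
rewrite E [X in _ < X]mulrCA [X in _ < X]mulrC ltr_pM2r ?expR_gt0 //.
apply: lt_le_trans (_ : K < p a0 * (1 + t * d)) _.
  rewrite /t mulrDr mulr1 (_ : p a0 * (K / (p a0 * d) * d) = K) ?ltrDl //.
    by rewrite ltrDr.
  by rewrite mulrCA divfK // mulf_neq0 // gt_eqF.
by apply: ler_wpM2l; [exact: ltW | exact: expR_ge1Dx].
Qed.

End Helpers.

Theorem proposition3p6 (R : realType) (n : nat) (Ap Am : {fset 'rV[R]_n})
    (f : 'rV[R]_n -> R) :
  [disjoint Ap & Am] ->
  full_dimensional (Ap `|` Am) ->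
  (forall b, b \in Am -> (convhull Ap)° b) ->
  in_S Ap Am f -> SONC f ->
  forall x y, Sing_pos f x -> Sing_pos f y -> x = y.
Proof.
move=> hdisj hfull hint [_ [c [hc hf]]] [s [hs hsf]] x y [xp [fx _]] [yp [fy _]].
pose lx := fun i => ln (x ord0 i).
pose v := fun i => ln (y ord0 i) - ln (x ord0 i).
pose z := zpt lx v.
have ex : x = z 0.
  by apply/rowP => i; rewrite mxE mul0r addr0 /lx lnK // posrE; exact: xp.
have ey : y = z 1.
  by apply/rowP => i; rewrite mxE mul1r /lx /v addrC subrK lnK // posrE; exact: yp.
have zero : forall t, f (z t) = 0.
  move=> t; rewrite hsf; last exact: zpt_pos.
  rewrite big_seq big1 // => -[[Bp Bm] c'] ttin.
  have zero_at u : f (z u) = 0 -> signomial Bp Bm c' (z u) = 0.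
    rewrite (hsf _ (zpt_pos _ _ _)) big_seq => /eqP; rewrite psumr_eq0.
      by move=> /allP/(_ _ ttin)/implyP/(_ ttin)/eqP.
    by move=> w win; exact: (hs w win).2.2 _ (zpt_pos _ _ _).
  have g0 : signomial Bp Bm c' (z 0) = 0 by apply: zero_at; move: fx; rewrite {1}ex.
  have g1 : signomial Bp Bm c' (z 1) = 0 by apply: zero_at; move: fy; rewrite {1}ey.
  case: (hs _ ttin) => /= [[hd [[h1 h2]|[_ [hm1 _]]]] [hcp hnn]].
    have Bm0 : Bm = fset0.
      apply: cardfs0_eq; move: (cardfsUI Bp Bm).
      by rewrite h1 h2 disjoint_fsetI0 // cardfs0 => /addnI <-.
    move/eqP: h2 => /cardfs1P [a Ba].
    have ca : 0 < c' a by apply: hcp; rewrite Ba !inE eqxx.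
    exfalso; exact: (sig_single' Ba Bm0 (zpt_pos lx v 0) ca g0).
  move/eqP: hm1 => /cardfs1P [b Bb]; subst Bm.
  have Gform u : signomial Bp [fset b] c' (z u) =
     \sum_(a <- Bp) c' a * expR (lin a lx + u * lin a v)
       - c' b * expR (lin b lx + u * lin b v).
    rewrite /signomial big_seq_fset1 monom_z; congr (_ - _).
    by apply: eq_bigr => a _; rewrite monom_z.
  have K := @key R n Bp b c' (fun a => lin a lx) (fun a => lin a v).
  rewrite /= in K; rewrite Gform; apply: K.
  - by move=> a aB; apply: hcp; rewrite inE aB.
  - by move: g0; rewrite Gform.
  - by move: g1; rewrite Gform.
  - by move: (hnn _ (zpt_pos lx v (1/2))); rewrite Gform.
have zS t : signomial Ap Am c (z t) = 0 by rewrite -hf ?zero //; exact: zpt_pos.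
have [v0|nv0] := pselect (forall i, v i = 0).
  by apply: (etrans ex); apply: (etrans _ (esym ey)); apply/rowP => i; rewrite !mxE v0 !mulr0.
exfalso.
have [i0 /eqP vi0] := (existsNP _).2 nv0.
have Apne : (Ap : seq _) != [::].
  apply/eqP => Anil.
  have : aff (Ap `|` Am) 0 by rewrite hfull.
  case=> l [sl1 _].
  case: (fset_0Vmem (Ap `|` Am)) => [E | [e]].
    by move: sl1; rewrite E big_seq_fset0 => /eqP; rewrite eq_sym oner_eq0.
  rewrite inE => /orP[eA|eB].
    by have : e \in (Ap : seq _) := eA; rewrite Anil.
  have [l' [_ [sl _]]] := nbhs_singleton (hint e eB).
  by move: sl; rewrite Anil big_nil => /eqP; rewrite eq_sym oner_eq0.
have [a0 a0A Ha0] := argmax (fun a => lin a v) Apne.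
pose w : 'rV[R]_n := \row_i v i.
have wpos : 0 < lin w v.
  rewrite /lin (bigD1 i0) //= mxE ltr_pwDl ?sumr_ge0 //.
    by rewrite lt_def mulf_neq0 // -expr2 sqr_ge0.
  by move=> i _; rewrite mxE -expr2 sqr_ge0.
have blt : forall b, b \in Am -> lin b v < lin a0 v.
  move=> b bB.
  have [d' Hd] := nbhs_ex (hint b bB).
  have d0 : 0 < d'%:num by [].
  pose d := d'%:num.
  pose dl := d / (`|w| + 1).
  have w1 : 0 < `|w| + 1 := ltr_wpDl (normr_ge0 _) ltr01.
  have dl0 : 0 < dl by exact: divr_gt0.
  have hb : ball b d (b + dl *: w).
    rewrite -ball_normE /ball_ /= opprD addrA subrr add0r normrN normrZ.
    rewrite gtr0_norm // /dl mulrAC ltr_pdivrMr //.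
    by rewrite ltr_pM2l // ltrDl.
  have [l [l0 [l1 lw]]] := Hd _ hb.
  have := congr1 (fun u => lin u v) lw; rewrite /= lin_add lin_scale lin_sum => E.
  have up : \sum_(a <- Ap) l a * lin a v <= lin a0 v.
    rewrite -[X in _ <= X]mul1r -l1 mulr_suml big_seq [X in _ <= X]big_seq.
    by apply: ler_sum => a aA; rewrite ler_wpM2l ?l0 ?Ha0.
  rewrite -E in up.
  by apply: lt_le_trans up; rewrite ltrDl mulr_gt0.
have [t Ht] := @asym R n Ap Am (fun a => c a * expR (lin a lx))
   (fun a => c a * expR (lin a lx)) (fun a => lin a v) a0 (fset_uniq _) a0A
   (fun a aA => mulr_ge0 (ltW (hc a ltac:(by rewrite inE aA))) (expR_ge0 _))
   (mulr_gt0 (hc a0 ltac:(by rewrite inE a0A)) (expR_gt0 _))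
   (fun b bB => mulr_ge0 (ltW (hc b ltac:(by rewrite inE bB orbT))) (expR_ge0 _))
   blt.
move: (zS t); rewrite /signomial => /eqP; rewrite subr_eq0 => /eqP E.
have S : forall P : {fset 'rV[R]_n},
   \sum_(a <- P) c a * expR (lin a lx) * expR (t * lin a v) =
   \sum_(a <- P) c a * monom a (z t).
  by move=> P; apply: eq_bigr => a _; rewrite monom_z expRD mulrA.
by move: Ht; rewrite !S E ltxx.
Qed.
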